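(* Fix integers $m\ge 1$ and $\theta\in(0,1]$, and let $f$ be a homogeneous voting rule. Suppose there is a neighborhood $U$ of the expected normalized profile $\hat P$ (in the space of normalized continuous profiles on candidates $\{1,\dots,m\}$, with the topology of weight vectors in $\mathbb R^{m!}$) such that $f$ is not CM in any continuous profile of $U$. Then $\lim_{n\to\infty}\rho(f,m,n,\theta)=0$.
   Context: A ranking over a finite candidate set is a strict total order on it. A discrete profile $P$ consists of a finite nonempty candidate set, a finite nonempty voter set of size $n$, and a ranking $P_v$ for each voter $v$; $w(p,P)$ is the number of voters with ranking $p$, $w(P)=n$. A continuous profile consists of a candidate set, a total weight $w(P)>0$ and weights $w(p,P)\ge0$ for each ranking $p$ summing to $w(P)$. The normalized profile $\bar P$ has weights $w(p,P)/w(P)$. Profiles on a fixed candidate set are identified with their weight vectors in $\mathbb R^{m!}$. A voting rule maps every profile (discrete or continuous) to one of its candidates; it is homogeneous if $f(P)=f(\bar P)$ always. CM (discrete): $f$ is CM in discrete $P$ if there is a discrete $Q$ with the same candidates and voters, $f(Q)\ne f(P)$, and every voter $v$ with $Q_v\ne P_v$ prefers $f(Q)$ to $f(P)$ according to $P_v$. CM (continuous): $f$ is CM in continuous $P$ if there is a continuous $Q$ with the same candidates and total weight, $f(Q)\ne f(P)$, and every ranking $p$ with $w(p,Q)<w(p,P)$ prefers $f(Q)$ to $f(P)$. Perturbed Culture with parameters $m,n\ge1$ and $\theta\in(0,1]$: a random discrete profile with candidates $\{1,\dots,m\}$ and voters $\{1,\dots,n\}$, where each voter independently has ranking $1\succ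 2\succ\cdots\succ m$ with probability $\theta$ and a uniformly random ranking with probability $1-\theta$. The expected normalized profile $\hat P$ is the continuous profile of total weight $1$ in which $1\succ\cdots\succ m$ has weight $\theta+\frac{1-\theta}{m!}$ and every other ranking has weight $\frac{1-\theta}{m!}$. The CM rate $\rho(f,m,n,\theta)$ is the probability that $f$ is CM in a profile drawn from this model. *)

(* Defs.v *)
From HB Require Import structures.
From mathcomp Require Import all_boot all_order all_algebra all_fingroup.
From mathcomp Require Import all_classical all_reals all_analysis.
Set Implicit Arguments. Unset Strict Implicit. Unset Printing Implicit Defensive.
Import Order.TTheory GRing.Theory Num.Theory.
Local Open Scope ring_scope.

(* Candidates are 'I_m = {0,...,m-1} (candidate i stands for i+1).
   A ranking is a permutation p of 'I_m, read as: p a = position of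
   candidate a (position 0 = top).  The ranking 1 > 2 > ... > m is the
   identity permutation 1%g. *)
Definition ranking (m : nat) := {perm 'I_m}.

Definition prefers m (p : ranking m) (a b : 'I_m) : bool := (p a < p b)%N.

Definition identity_ranking m : ranking m := 1%g.

Definition cprofile (R : realType) m := {ffun ranking m -> R}.

Definition ctotal (R : realType) m (P : cprofile R m) : R := \sum_(p : ranking m) P p.

Definition is_cprofile (R : realType) m (P : cprofile R m) : Prop :=
  (forall p, 0 <= P p) /\ 0 < ctotal P.

Definition cnormalize (R : realType) m (P : cprofile R m) : cprofile R m :=
  [ffun p => P p / ctotal P].

Definition dprofile m n := {ffun 'I_n -> ranking m}.

Definition dweight m n (P : dprofile m n) (p : ranking m) : nat :=
  #|[set v | P v == p]|.

Definition dnormalize (R : realType) m n (P : dprofile m n) : cprofile R m :=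
  [ffun p => (dweight P p)%:R / n%:R].

Record voting_rule (R : realType) m := VotingRule {
  vr_disc : forall n, dprofile m n -> 'I_m;
  vr_cont : cprofile R m -> 'I_m }.

Definition homogeneous (R : realType) m (f : voting_rule R m) : Prop :=
  (forall n (P : dprofile m n), (0 < n)%N -> vr_disc f P = vr_cont f (dnormalize R P))
  /\ (forall P : cprofile R m, is_cprofile P -> vr_cont f P = vr_cont f (cnormalize P)).

Definition dCM (R : realType) m n (f : voting_rule R m) (P : dprofile m n) : bool :=
  [exists Q : dprofile m n,
     (vr_disc f Q != vr_disc f P) &&
     [forall v : 'I_n, (Q v != P v) ==> prefers (P v) (vr_disc f Q) (vr_disc f P)]].

Definition cCM (R : realType) m (f : voting_rule R m) (P : cprofile R m) : Prop :=
  exists Q : cprofile R m,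
    [/\ is_cprofile Q, ctotal Q = ctotal P, vr_cont f Q != vr_cont f P &
     forall p, Q p < P p -> prefers p (vr_cont f Q) (vr_cont f P)].

Definition pc_prob (R : realType) m n (theta : R) (P : dprofile m n) : R :=
  \prod_(v : 'I_n)
    ((if P v == identity_ranking m then theta else 0) + (1 - theta) / (m`!)%:R).

Definition cm_rate (R : realType) m (f : voting_rule R m) (n : nat) (theta : R) : R :=
  \sum_(P : dprofile m n | dCM f P) pc_prob theta P.

Definition expected_profile (R : realType) m (theta : R) : cprofile R m :=
  [ffun p => (if p == identity_ranking m then theta else 0) + (1 - theta) / (m`!)%:R].

(* Main.v *)
Require Import Defs.
From HB Require Import structures.
From mathcomp Require Import all_boot all_order all_algebra all_fingroup.
From mathcomp Require Import all_classical all_reals all_analysis.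
From mathcomp Require Import ring lra.
Import Order.TTheory GRing.Theory Num.Theory.
Local Open Scope ring_scope.
Import numFieldNormedType.Exports.
Local Open Scope classical_set_scope.

Set Implicit Arguments.
Unset Strict Implicit.
Section Moments.
Variables (R : realType) (T : finType) (n : nat) (E : T -> R).
Hypothesis E1 : \sum_j E j = 1.

Definition wt (g : {ffun 'I_n -> T}) := \prod_v E (g v).

Lemma sum_prod (h : 'I_n -> T -> R) :
  \sum_(g : {ffun 'I_n -> T}) \prod_v h v (g v) = \prod_v \sum_j h v j.
Proof. by rewrite bigA_distr_bigA. Qed.

Lemma mom2 (a b : T -> R) u v :
  \sum_(g : {ffun 'I_n -> T}) wt g * (a (g u) * b (g v)) =
  \prod_t \sum_j E j * ((if t == u then a j else 1) * (if t == v then b j else 1)).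
Proof.
rewrite -sum_prod; apply: eq_bigr => g _.
rewrite big_split big_split /= /wt; congr (_ * (_ * _)).
- by rewrite (bigD1 u) //= eqxx big1 ?mulr1 // => t /negbTE ->.
- by rewrite (bigD1 v) //= eqxx big1 ?mulr1 // => t /negbTE ->.
Qed.

Lemma var_eq (p : T) :
  \sum_(g : {ffun 'I_n -> T}) wt g * (\sum_v ((g v == p)%:R - E p)) ^+ 2
  = n%:R * (E p * (1 - E p)).
Proof.
set a := fun j : T => (j == p)%:R - E p.
have Hr : \sum_(j | j != p) E j = 1 - E p.
  by move: E1; rewrite (bigD1 p) //=; lra.
have h0 : \sum_j E j * (j == p)%:R = E p.
  rewrite (bigD1 p) //= eqxx mulr1 big1 ?addr0 // => j /negbTE ->.
  by rewrite mulr0.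
have h1 : \sum_j E j * a j = 0.
  rewrite /a; under eq_bigr do rewrite mulrBr.
  by rewrite sumrB h0 -mulr_suml E1 mul1r subrr.
have h2 : \sum_j E j * (a j * a j) = E p * (1 - E p).
  rewrite (bigD1 p) //= /a eqxx.
  under eq_bigr => j /negbTE -> do rewrite sub0r mulrNN mulrA.
  rewrite -mulr_suml -mulr_suml Hr (_ : true%:R = 1 :> R) //. ring.
transitivity (\sum_(g : {ffun 'I_n -> T}) \sum_u \sum_v wt g * (a (g u) * a (g v))).
  apply: eq_bigr => g _; rewrite expr2 big_distrlr /= mulr_sumr.
  by apply: eq_bigr => u _; rewrite mulr_sumr.
rewrite exchange_big /=; under eq_bigr do rewrite exchange_big /=.
under eq_bigr do under eq_bigr do rewrite (mom2 a a).
transitivity (\sum_(u : 'I_n) E p * (1 - E p)); last first.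
  by rewrite sumr_const card_ord mulr_natl.
apply: eq_bigr => u _; rewrite (bigD1 u) //= [X in _ + X]big1 ?addr0.
- rewrite (bigD1 u) //= eqxx h2 big1 ?mulr1 // => t /negbTE ->.
  by rewrite mulr1 -[RHS]E1; apply: eq_bigr => j _; rewrite mulr1.
- move=> v /negbTE uv; rewrite (bigD1 u) //= eqxx eq_sym uv.
  under eq_bigr do rewrite mulr1.
  by rewrite h1 mul0r.
Qed.

Lemma cheb (eps : R) : 0 < eps -> (0 < n)%N -> (forall j, 0 <= E j) ->
  \sum_(g : {ffun 'I_n -> T}) wt g *
     \sum_p (((\sum_v (g v == p)%:R) / n%:R - E p) / eps) ^+ 2
  <= (n%:R * eps ^+ 2)^-1.
Proof.
move=> e0 n0 E0.
have nR : n%:R != 0 :> R by rewrite pnatr_eq0 -lt0n.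
have eR : eps != 0 by rewrite gt_eqF.
have key : forall (g : {ffun 'I_n -> T}) p,
    (((\sum_v (g v == p)%:R) / n%:R - E p) / eps) ^+ 2
    = (\sum_v ((g v == p)%:R - E p)) ^+ 2 / (n%:R * eps) ^+ 2.
  move=> g p; rewrite sumrB sumr_const card_ord -(mulr_natl (E p)); set S := \sum_v _.
  by field; rewrite nR eR.
under eq_bigr do under eq_bigr do rewrite key.
under eq_bigr do rewrite mulr_sumr.
rewrite exchange_big /=.
under eq_bigr do [under eq_bigr do rewrite mulrA; rewrite -mulr_suml var_eq].
apply: le_trans (_ : \sum_p E p / (n%:R * eps ^+ 2) <= _).
  apply: ler_sum => p _.
  rewrite (_ : n%:R * (E p * (1 - E p)) / (n%:R * eps) ^+ 2
             = (E p - E p ^+ 2) / (n%:R * eps ^+ 2)); last by field; rewrite nR eR.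
  apply: ler_wpM2r; first by rewrite invr_ge0 mulr_ge0 // sqr_ge0.
  by rewrite lerBlDr lerDl sqr_ge0.
by rewrite -mulr_suml E1 mul1r.
Qed.
End Moments.

Section Disc.
Variables (R : realType) (m n : nat).

Lemma dweightE (P : dprofile m n) p :
  (dweight P p)%:R = \sum_v (P v == p)%:R :> R.
Proof.
rewrite /dweight -sum1_card natr_sum big_mkcond /=.
by apply: eq_bigr => v _; rewrite inE; case: (P v == p).
Qed.

Lemma dtotal (P : dprofile m n) : (0 < n)%N -> ctotal (dnormalize R P) = 1.
Proof.
move=> n0; rewrite /ctotal.
under eq_bigr do rewrite ffunE dweightE.
rewrite -mulr_suml exchange_big /=.
have h1 : forall v, \sum_p (P v == p)%:R = 1 :> R.
  move=> v; rewrite (bigD1 (P v)) //= eqxx big1 ?addr0 //.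
  by move=> p; rewrite eq_sym => /negbTE ->.
under eq_bigr do rewrite h1.
rewrite sumr_const card_ord mulfV // pnatr_eq0 -lt0n //.
Qed.

Lemma dnorm_ge0 (P : dprofile m n) p : 0 <= dnormalize R P p.
Proof. by rewrite ffunE divr_ge0. Qed.

Lemma dCM_cCM (f : voting_rule R m) (P : dprofile m n) :
  homogeneous f -> (0 < n)%N -> dCM f P -> cCM f (dnormalize R P).
Proof.
move=> [hom1 _] n0 /existsP [Q /andP [neq /forallP H]].
exists (dnormalize R Q); rewrite -!hom1 //; split => //.
- by split; [move=> p; exact: dnorm_ge0 | rewrite dtotal].
- by rewrite !dtotal.
move=> p; rewrite !ffunE ltr_pM2r ?invr_gt0 ?ltr0n // ltr_nat => lt.
have : ~~ ([set v | P v == p]%SET \subset [set v | Q v == p]%SET).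
  apply: contraTN lt => sub; rewrite -leqNgt /dweight; exact: subset_leq_card.
case/subsetPn => v; rewrite !inE => /eqP Pv Qv.
have := H v; rewrite Pv Qv /=.
by move=> ->.
Qed.
End Disc.

Theorem lemma3p1 (R : realType) (m : nat) (theta : R) (f : voting_rule R m) :
  (0 < m)%N -> 0 < theta -> theta <= 1 ->
  homogeneous f ->
  (exists2 eps : R, 0 < eps &
     forall P : cprofile R m,
       (forall p, 0 <= P p) -> ctotal P = 1 ->
       (forall p, `|P p - expected_profile m theta p| < eps) ->
       ~ cCM f P) ->
  (fun n : nat => cm_rate f n theta) @ \oo --> (0 : R).
Proof.
move=> m0 t0 t1 hom [eps e0 Hne].
set E := fun p => expected_profile m theta p.
have mR : (m`!)%:R != 0 :> R by rewrite pnatr_eq0 -lt0n fact_gt0.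
have E0 : forall p, 0 <= E p.
  move=> p; rewrite /E ffunE addr_ge0 ?divr_ge0 ?subr_ge0 //.
  by case: (p == _) => //; exact: ltW.
have E1 : \sum_p E p = 1.
  rewrite /E; under eq_bigr do rewrite ffunE.
  rewrite big_split /= (bigD1 (identity_ranking m)) //= eqxx big1 ?addr0; last first.
    by move=> q /negbTE ->.
  rewrite sumr_const card_Sn -mulr_natr; field; exact: mR.
have pcE : forall n (P : dprofile m n), pc_prob theta P = wt E P.
  by move=> n P; rewrite /pc_prob /wt; apply: eq_bigr => v _; rewrite /E ffunE.
apply: (@squeeze_cvgr _ _ _ _ (fun=> 0) (fun n => 2 * (eps ^+ 2)^-1 * harmonic n)).
- exists 1%N => // k /= k0.
  have w0 : forall P : dprofile m k, 0 <= wt E P.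
    by move=> P; apply: prodr_ge0 => v _; exact: E0.
  apply/andP; split.
    by rewrite /cm_rate; apply: sumr_ge0 => P _; rewrite pcE.
  apply: (le_trans _ (le_trans (cheb E1 e0 k0 E0) _)).
    rewrite /cm_rate big_mkcond /=; apply: ler_sum => P _; rewrite pcE.
    case: ifP => hP; last first.
      by apply: mulr_ge0 => //; apply: sumr_ge0 => p _; exact: sqr_ge0.
    rewrite ler_peMr // leNgt; apply/negP => lt1.
    apply: (Hne (dnormalize R P)).
    + exact: dnorm_ge0.
    + exact: dtotal.
    + move=> p; rewrite ffunE dweightE.
      have : (((\sum_v (P v == p)%:R) / k%:R - E p) / eps) ^+ 2 < 1.
        apply: le_lt_trans lt1; rewrite (bigD1 p) //= lerDl.
        by apply: sumr_ge0 => q _; exact: sqr_ge0.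
      rewrite -/(E p).
      set x := (\sum_v _) / _ - _.
      have hx : x = (x / eps) * eps by rewrite divfK // gt_eqF.
      move: (x / eps) hx => y -> hy.
      have y1 : y < 1 by rewrite ltNge; apply/negP => hy1; nra.
      have y2 : -1 < y by rewrite ltNge; apply/negP => hy1; nra.
      rewrite ltr_norml; apply/andP; split; nra.
    + exact: dCM_cCM hom k0 hP.
  rewrite -[k.+1%:R]natr1.
  have x1 : 1 <= k%:R :> R by rewrite ler1n.
  move: (k%:R) x1 => x x1.
  have eR : eps != 0 by rewrite gt_eqF.
  have xR : x != 0 by rewrite gt_eqF //; lra.
  have x1R : x + 1 != 0 by rewrite gt_eqF //; lra.
  rewrite (_ : 2 * (eps ^+ 2)^-1 * (x + 1)^-1 = (x * eps ^+ 2)^-1 * (2 * x / (x + 1))); last first.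
    by field; rewrite eR xR x1R.
  rewrite ler_peMr ?invr_ge0 ?mulr_ge0 ?sqr_ge0 //; try lra; try exact: ltW.
  rewrite ler_pdivlMr; lra.
- exact: cvg_cst.
- rewrite -(mulr0 (2 / eps ^+ 2)); apply: cvgM; [exact: cvg_cst | exact: cvg_harmonic].
Qed.
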